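(* Let $\square$ be a subcomplex of $I^n$, and let $S^k$ be a subcomplex of $\square$ isomorphic to $\partial I^{k+1}$, with $k\geq 1$. Then $S^k$ is a face-like subcomplex of $\square$ if and only if $S^k$ is not the boundary of a $(k+1)$-dimensional face of $\square$, i.e. $S^k\neq\partial\hat F$ for every $F\in\square$.
   Context: A cubical complex consists of a finite vertex set $V$ and a collection $\square$ of nonempty subsets of $V$ (faces) such that: every singleton is a face; for each face $F$ the poset $\hat F=\{G\in\square : G\subseteq F\}$ is isomorphic to the poset of nonempty faces of a cube (of dimension $\dim F$); and the intersection of two faces is empty or a face. $I^n$ is the $n$-cube as a cubical complex: vertex set $\{0,1\}^n$, faces indexed by $\{0,1,*\}^n$ (the face $(p_i)$ is the set of $x$ with $x_i=p_i$ whenever $p_i\ne *$). $\partial I^{m}$ is $I^m$ with the top face $( *,\dots,* )$ removed; for a face $F$, $\partial\hat F=\hat F\setminus\{F\}$. A subcomplex is a subset of vertices and faces forming a cubical complex; isomorphism means a vertex bijection mapping faces to faces in both directions. A subcomplex $\Gamma$ of $\square$ is face-like if for every face $F\in\square$, $F\cap V(\Gamma)$ is empty or a face of $\Gamma$. *)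

(* Defs.v *)
From mathcomp Require Import all_boot.
Set Implicit Arguments. Unset Strict Implicit. Unset Printing Implicit Defensive.

(* Vertices of I^n: {0,1}^n, i.e. functions 'I_n -> bool. *)
Notation cvert n := {ffun 'I_n -> bool}.

(* A complex on a finite type T is given by its set of faces; its vertex set
   is the union of the faces (every vertex is a singleton face). *)
Definition vertices (T : finType) (K : {set {set T}}) : {set T} :=
  \bigcup_(F in K) F.

(* The face of I^m indexed by p in {0,1,*}^m (None encodes the star). *)
Definition cube_face (m : nat) (p : {ffun 'I_m -> option bool}) : {set cvert m} :=
  [set x : cvert m | [forall i, if p i is Some b then x i == b else true]].

Definition cube_faces (m : nat) : {set {set cvert m}} :=
  [set cube_face p | p : {ffun 'I_m -> option bool}].

Definition boundary_cube (m : nat) : {set {set cvert m}} :=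
  cube_faces m :\ [set: cvert m].

Definition hat (T : finType) (K : {set {set T}}) (F : {set T}) : {set {set T}} :=
  [set G in K | G \subset F].

Definition hat_boundary (T : finType) (K : {set {set T}}) (F : {set T}) :=
  hat K F :\ F.

Definition poset_iso (T U : finType) (A : {set {set T}}) (B : {set {set U}}) :=
  exists phi : {set T} -> {set U},
    [/\ {in A &, injective phi}, phi @: A = B &
        {in A &, forall G H : {set T}, (G \subset H) = (phi G \subset phi H)}].

Definition cubical_complex (T : finType) (K : {set {set T}}) : Prop :=
  [/\ set0 \notin K,
      (forall x, x \in vertices K -> [set x] \in K),
      (forall F, F \in K -> exists m, poset_iso (hat K F) (cube_faces m)) &
      (forall F G, F \in K -> G \in K -> F :&: G = set0 \/ F :&: G \in K)].

(* Gamma is a subcomplex of K: a subset of the faces forming a cubical complex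
   (its vertex set is automatically a subset of that of K). *)
Definition subcomplex (T : finType) (G K : {set {set T}}) : Prop :=
  G \subset K /\ cubical_complex G.

Definition complex_iso (T U : finType) (K : {set {set T}}) (L : {set {set U}}) :=
  exists f : T -> U,
    [/\ {in vertices K &, injective f},
        f @: vertices K = vertices L &
        forall A : {set T}, A \subset vertices K -> (A \in K) = (f @: A \in L)].

Definition face_like (T : finType) (G K : {set {set T}}) : Prop :=
  forall F, F \in K -> F :&: vertices G = set0 \/ F :&: vertices G \in G.

(* Main.v *)
Require Import Defs.
From mathcomp Require Import all_boot.
Set Implicit Arguments. Unset Strict Implicit. Unset Printing Implicit Defensive.

Lemma in_cube_face m (p : {ffun 'I_m -> option bool}) x :
  (x \in cube_face p) = [forall i, if p i is Some b then x i == b else true].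
Proof. by rewrite inE. Qed.

Definition wit m (p : {ffun 'I_m -> option bool}) (b : bool) : cvert m :=
  [ffun j => if p j is Some c then c else b].

Lemma wit_in m (p : {ffun 'I_m -> option bool}) b : wit p b \in cube_face p.
Proof. by rewrite in_cube_face; apply/forallP=> i; rewrite ffunE; case: (p i). Qed.

Lemma sub_face m (p q : {ffun 'I_m -> option bool}) :
  cube_face q \subset cube_face p -> forall i b, p i = Some b -> q i = Some b.
Proof.
move=> sub i b pib; have := subsetP sub _ (wit_in q (~~ b)).
rewrite in_cube_face => /forallP /(_ i); rewrite pib ffunE.
by case: (q i) => [c|] /eqP; [move->|case: b {pib}].
Qed.

Lemma cube_face_inj m : injective (@cube_face m).
Proof.
move=> p q e; apply/ffunP=> i.
case pi: (p i) => [b|].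
  by rewrite (sub_face (p:=p) (q:=q) _ pi) // e.
case qi: (q i) => [b|] //.
by rewrite -pi (sub_face (p:=q) (q:=p) _ qi) // e.
Qed.

Lemma set1_face m (x : cvert m) : [set x] = cube_face [ffun i => Some (x i)].
Proof.
apply/setP=> y; rewrite inE in_cube_face.
apply/eqP/forallP => [->|H] ; first by move=> i; rewrite ffunE.
by apply/ffunP=> i; have := H i; rewrite ffunE => /eqP.
Qed.

Lemma set1_in_faces m (x : cvert m) : [set x] \in cube_faces m.
Proof. by rewrite set1_face; apply: imset_f. Qed.

Lemma face_nonempty m (p : {ffun 'I_m -> option bool}) : cube_face p != set0.
Proof. by apply/set0Pn; exists (wit p true); apply: wit_in. Qed.

Definition flip m (c : 'I_m) (x : cvert m) : cvert m :=
  [ffun j => if j == c then ~~ x j else x j].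

Lemma flipE m c (x : cvert m) j : flip c x j = x j (+) (j == c).
Proof. by rewrite ffunE; case: (j == c); rewrite ?addbT ?addbF. Qed.

Lemma flipK m c : involutive (@flip m c).
Proof. by move=> x; apply/ffunP=> j; rewrite !flipE -addbA addbb addbF. Qed.

Lemma flip_neq m c (x : cvert m) : flip c x != x.
Proof. by apply/eqP=> /ffunP /(_ c); rewrite flipE eqxx addbT; case: (x c). Qed.

Lemma edge_flip n (a b : cvert n) : a != b -> [set a; b] \in cube_faces n ->
  exists c, b = flip c a.
Proof.
move=> ab /imsetP [p _ e].
have [c acbc] : exists c, a c != b c.
  by apply/existsP; apply: contraR ab => /existsPn H; apply/eqP/ffunP=> i; have := H i; rewrite negbK => /eqP.
exists c; apply/ffunP=> j; rewrite flipE.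
have aF : a \in cube_face p by rewrite -e !inE eqxx.
have bF : b \in cube_face p by rewrite -e !inE eqxx orbT.
have star i : a i != b i -> p i = None.
  move: aF bF; rewrite !in_cube_face => /forallP /(_ i) + /forallP /(_ i).
  by case: (p i) => // bb /eqP -> /eqP ->; rewrite eqxx.
case: (eqVneq j c) => [->|jc]; first by move: acbc; case: (a c); case: (b c).
rewrite addbF; apply/eqP; apply: contraTT isT => ajbj.
have zF : flip c a \in cube_face p.
  move: aF; rewrite !in_cube_face => /forallP H; apply/forallP=> i.
  have := H i; rewrite flipE; case: (eqVneq i c) => [->|_]; first by rewrite star.
  by rewrite addbF.
move: zF; rewrite -e !inE => /orP [/eqP /ffunP /(_ c)|/eqP /ffunP /(_ j)].
  by rewrite flipE eqxx addbT; case: (a c).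
by rewrite flipE (negbTE jc) addbF => ajbj2; rewrite ajbj2 eqxx in ajbj.
Qed.


Lemma flip_ind m (P : cvert m -> Prop) : P [ffun=> false] ->
  (forall y j, P y -> P (flip j y)) -> forall y, P y.
Proof.
move=> P0 PS y; move: {2}#|[set i | y i]| (leqnn #|[set i | y i]|) => k.
elim: k y => [|k IH] y.
  rewrite leqn0 cards_eq0 => /eqP e; suff -> : y = [ffun=> false] by [].
  apply/ffunP=> i; rewrite ffunE; apply/negbTE; apply/negP=> yi.
  by have := in_set0 i; rewrite -e inE yi.
case: (boolP [exists i, y i]) => [/existsP [i yi]|/existsPn H] hk; last first.
  suff -> : y = [ffun=> false] by [].
  by apply/ffunP=> i; rewrite ffunE; apply/negbTE.
rewrite -(flipK i y); apply: PS; apply: IH.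
have : [set j | flip i y j] \proper [set j | y j].
  apply/properP; split.
    apply/subsetP=> j; rewrite !inE flipE; case: (eqVneq j i) => [->|_]; first by rewrite yi.
    by rewrite addbF.
  by exists i; rewrite !inE // flipE eqxx yi.
by move/proper_card => h; rewrite -ltnS (leq_trans h hk).
Qed.

Lemma square m (G : cvert m) a b c d : a != b ->
  flip c (flip b G) = flip d (flip a G) -> flip c (flip b G) != G -> c = a.
Proof.
move=> ab e ne; apply/eqP; apply: contraNT ne => ca.
have ac : a != c by rewrite eq_sym.
have := congr1 (fun x : cvert m => x a) e; rewrite !flipE eqxx (negbTE ac) (negbTE ab).
rewrite !addbF addbT => h.
have da : d = a.
  apply/eqP; rewrite eq_sym; move: h; case: (a == d) => //; rewrite addbF.
  by case: (G a).
by rewrite e da flipK.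
Qed.

Definition z0 m : cvert m := [ffun=> false].

Lemma affine N n (g : cvert N -> cvert n) : injective g ->
  (forall y i, exists c, g (flip i y) = flip c (g y)) ->
  exists D : 'I_N -> 'I_n, injective D /\ forall y i, g (flip i y) = flip (D i) (g y).
Proof.
move=> ginj edge.
have [D HD] : exists D : 'I_N -> 'I_n, forall i, g (flip i (z0 N)) = flip (D i) (g (z0 N)).
  have edgeb y i : exists c, g (flip i y) == flip c (g y) by have [c /eqP] := edge y i; exists c.
  by exists (fun i => xchoose (edgeb (z0 N) i)) => i; apply/eqP; apply: (xchooseP (edgeb _ i)).
have Dinj : injective D.
  move=> i j e; apply/eqP; apply: contraT => ij.
  have : flip i (z0 N) = flip j (z0 N) :> cvert N.
    by apply: ginj; rewrite !HD e.
  move/ffunP/(_ i); rewrite !flipE eqxx (negbTE ij).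
  by rewrite ffunE.
exists D; split=> //.
apply: flip_ind => [|y j IH] i; first exact: HD.
case: (eqVneq i j) => [->|ij].
  by rewrite flipK IH flipK.
have [c Hc] := edge (flip j y) i.
have [d Hd] := edge (flip i y) j.
have comm : flip j (flip i y) = flip i (flip j y).
  by apply/ffunP=> l; rewrite !flipE -!addbA (addbC (l == i)).
rewrite Hc IH; congr flip; rewrite IH in Hc.
apply: (square (G := g y) (b := D j) (d := d)).
- apply/eqP=> e; move/eqP: ij; apply; apply: Dinj; exact: e.
- by rewrite -Hc -IH -Hd comm.
- rewrite -Hc; apply/eqP=> e; have := ginj _ _ e.
  by apply/eqP; rewrite -comm; apply/eqP=> /ffunP /(_ i); rewrite !flipE eqxx (negbTE ij) addbF addbT; case: (y i).
Qed.


Lemma formula N n (g : cvert N -> cvert n) (D : 'I_N -> 'I_n) : injective D ->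
  (forall y i, g (flip i y) = flip (D i) (g y)) ->
  forall y c, g y c = g (z0 N) c (+) [exists i, y i && (D i == c)].
Proof.
move=> Dinj H; apply: flip_ind => [|y j IH] c.
  suff -> : [exists i, (z0 N) i && (D i == c)] = false by rewrite addbF.
  by apply/existsPn=> i; rewrite ffunE.
rewrite H flipE IH -addbA; congr addb.
case: (eqVneq c (D j)) => [->|cD].
  have e : forall y' : cvert N, [exists i, y' i && (D i == D j)] = y' j.
    move=> y'; apply/existsP/idP => [[i /andP [yi /eqP /Dinj ij]]|yj]; first by rewrite -ij.
    by exists j; rewrite yj eqxx.
  by rewrite !e flipE eqxx.
rewrite addbF; apply/existsP/existsP => [] [i /andP [yi /eqP Dic]]; exists i;
  rewrite -Dic eqxx andbT; move: yi; rewrite flipE; case: (eqVneq i j) => [ij|_];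
  rewrite ?addbF //; by move: cD; rewrite -Dic ij eqxx.
Qed.

Lemma gD N n (g : cvert N -> cvert n) (D : 'I_N -> 'I_n) : injective D ->
  (forall y i, g (flip i y) = flip (D i) (g y)) ->
  forall y i, g y (D i) = g (z0 N) (D i) (+) y i.
Proof.
move=> Dinj H y i; rewrite (formula Dinj H); congr addb.
apply/existsP/idP => [[j /andP [yj /eqP /Dinj <-]] //|yi].
by exists i; rewrite yi eqxx.
Qed.

Lemma gnD N n (g : cvert N -> cvert n) (D : 'I_N -> 'I_n) : injective D ->
  (forall y i, g (flip i y) = flip (D i) (g y)) ->
  forall y c, ~~ [exists i, D i == c] -> g y c = g (z0 N) c.
Proof.
move=> Dinj H y c /existsPn nc; rewrite (formula Dinj H).
suff -> : [exists i, y i && (D i == c)] = false by rewrite addbF.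
by apply/existsPn=> i; rewrite (negbTE (nc i)) andbF.
Qed.

Lemma preimage_face N n (g : cvert N -> cvert n) (D : 'I_N -> 'I_n) : injective D ->
  (forall y i, g (flip i y) = flip (D i) (g y)) ->
  forall p y0, g y0 \in cube_face p ->
  [set y | g y \in cube_face p] \in cube_faces N.
Proof.
move=> Dinj H p y0 Hy0.
pose q : {ffun 'I_N -> option bool} :=
  [ffun i => if p (D i) is Some b then Some (b (+) g (z0 N) (D i)) else None].
apply/imsetP; exists q => //; apply/setP=> y; rewrite !inE.
apply/forallP/forallP => Hy i.
  have := Hy (D i); rewrite ffunE (gD Dinj H y).
  by case: (p (D i)) => // b /eqP <-; rewrite addbAC addbb.
case: (boolP [exists j, D j == i]) => [/existsP [j /eqP <-]|nD].
  have := Hy j; rewrite ffunE (gD Dinj H y).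
  by case: (p (D j)) => // b /eqP ->; rewrite addbC -addbA addbb addbF.
rewrite (gnD Dinj H _ nD); move: Hy0; rewrite in_cube_face => /forallP /(_ i).
by rewrite (gnD Dinj H _ nD).
Qed.

Lemma image_face N n (g : cvert N -> cvert n) (D : 'I_N -> 'I_n) : injective D ->
  (forall y i, g (flip i y) = flip (D i) (g y)) ->
  g @: setT \in cube_faces n.
Proof.
move=> Dinj H; pose p : {ffun 'I_n -> option bool} :=
  [ffun c => if [exists i, D i == c] then None else Some (g (z0 N) c)].
apply/imsetP; exists p => //; apply/setP=> x; rewrite in_cube_face.
apply/imsetP/forallP => [[y _ ->] c|Hx].
  rewrite ffunE; case: ifP => // /negbT nD.
  by rewrite (gnD Dinj H _ nD).
exists [ffun i => x (D i) (+) g (z0 N) (D i)] => //.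
apply/ffunP=> c; case: (boolP [exists i, D i == c]) => [/existsP [i /eqP <-]|nD].
  by rewrite (gD Dinj H) ffunE addbC -addbA addbb addbF.
rewrite (gnD Dinj H _ nD); have := Hx c; rewrite ffunE (negbTE nD).
by move/eqP.
Qed.


Lemma card_fam m (rT : finType) (F : 'I_m -> rT -> bool) :
  #|[set f : {ffun 'I_m -> rT} | [forall i, F i (f i)]]| = \prod_i #|F i|.
Proof.
have := (@card_family _ (fun _ => rT) (fun i => [pred x | F i x])); rewrite foldrE big_image /= => <-.
apply: eq_card => f; rewrite inE; apply/forallP/familyP => //.
Qed.

Lemma prod_split m (p : {ffun 'I_m -> option bool}) (c : nat) (h : 'I_m -> nat) :
  (forall i, h i = if p i is Some _ then 1 else c) ->
  \prod_i h i = c ^ #|[set i | p i == None]|.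
Proof.
move=> Hh; rewrite (bigID (fun i => p i == None)) /=.
rewrite [X in _ * X]big1 ?muln1; last by move=> i; rewrite Hh; case: (p i).
rewrite -prod_nat_const; apply: eq_big => [i|i /eqP pi]; first by rewrite inE.
by rewrite Hh pi.
Qed.

Lemma card_face m (p : {ffun 'I_m -> option bool}) :
  #|cube_face p| = 2 ^ #|[set i | p i == None]|.
Proof.
rewrite (card_fam (fun i x => if p i is Some b then x == b else true)).
apply: prod_split => i; case: (p i) => [b|]; first by rewrite -(card1 b); apply: eq_card.
by rewrite -card_bool; apply: eq_card.
Qed.

Definition refines m (p : {ffun 'I_m -> option bool}) :=
  [set q : {ffun 'I_m -> option bool} | [forall i, if p i is Some b then q i == Some b else true]].

Lemma card_refines m (p : {ffun 'I_m -> option bool}) :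
  #|refines p| = 3 ^ #|[set i | p i == None]|.
Proof.
rewrite (card_fam (fun i x => if p i is Some b then x == Some b else true)).
apply: prod_split => i; case: (p i) => [b|]; first by rewrite -(card1 (Some b)); apply: eq_card.
by have := card_option bool; rewrite card_bool => <-; apply: eq_card.
Qed.


Definition atoms (T : finType) (A : {set {set T}}) :=
  [set X in A | [forall Y in A, (Y \subset X) ==> (Y == X)]].

Lemma atoms_card (T U : finType) (A : {set {set T}}) (B : {set {set U}}) :
  poset_iso A B -> #|atoms A| = #|atoms B|.
Proof.
case=> phi [inj img ord].
have sub : atoms A \subset A by apply/subsetP=> X; rewrite inE => /andP [].
suff <- : phi @: atoms A = atoms B.
  by rewrite card_in_imset // => X Y /(subsetP sub) XA /(subsetP sub) YA; apply: inj.
apply/setP=> X'; apply/imsetP/idP => [[X] | ].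
  rewrite inE => /andP [XA /forallP HX] ->; rewrite inE -img imset_f //=.
  apply/forallP=> Y'; apply/implyP=> Y'B; apply/implyP=> sY.
  move: Y'B => /imsetP [Y YA eY]; rewrite eY in sY *.
  rewrite -ord // in sY; have := HX Y; rewrite YA sY /= => /eqP -> //.
rewrite inE => /andP [X'B /forallP HX]; move: X'B; rewrite -img => /imsetP [X XA eX].
exists X => //; rewrite inE XA /=; apply/forallP=> Y; apply/implyP=> YA; apply/implyP=> sY.
have := HX (phi Y); rewrite -img imset_f //= eX -ord // sY /= => /eqP e.
by apply/eqP; apply: inj.
Qed.

Lemma atoms_eq (T : finType) (A : {set {set T}}) (V : {set T}) :
  set0 \notin A -> (forall X x, X \in A -> x \in X -> x \in V) ->
  (forall x, x \in V -> [set x] \in A) -> atoms A = [set [set x] | x in V].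
Proof.
move=> A0 AV VA; apply/setP=> X; apply/idP/imsetP => [|[x xV ->]].
  rewrite inE => /andP [XA /forallP HX].
  have /set0Pn [x xX] : X != set0 by apply: contraNneq A0 => <-.
  exists x; first exact: AV xX.
  have := HX [set x]; rewrite VA ?(AV _ _ XA xX) //= sub1set xX /= => /eqP //.
rewrite inE VA //=; apply/forallP=> Y; apply/implyP=> YA; apply/implyP.
rewrite subset1 => /orP [] // /eqP Y0; by rewrite -Y0 YA in A0.
Qed.

Lemma card_cube_faces m : #|cube_faces m| = 3 ^ m.
Proof.
by rewrite card_imset; last exact: cube_face_inj; rewrite card_ffun card_option card_bool card_ord.
Qed.

Lemma sub_in_K n (K : {set {set cvert n}}) : subcomplex K (cube_faces n) ->
  forall F G, F \in K -> G \in cube_faces n -> G \subset F -> G \in K.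
Proof.
case=> /subsetP KC [K0 Kv Kiso Kint] F G FK GC GF.
have [m iso] := Kiso F FK.
have /imsetP [p _ Fp] := KC F FK.
set A := hat K F.
have cardA : #|A| = 3 ^ m.
  case: iso => phi [inj img _]; rewrite -card_cube_faces -img card_in_imset //.
have cardF : #|F| = 2 ^ m.
  have := atoms_card iso.
  rewrite (atoms_eq (V := F)); first last.
  - move=> x xF; rewrite inE sub1set xF andbT; apply: Kv.
    by apply/bigcupP; exists F.
  - by move=> X x; rewrite inE => /andP [_ /subsetP]; apply.
  - by apply: contra K0; rewrite inE => /andP [].
  rewrite (atoms_eq (V := setT)); first last.
  - by move=> x _; apply: set1_in_faces.
  - by [].
  - by apply/imsetP=> [[q _ /esym /eqP]]; apply/negP; apply: face_nonempty.
  rewrite !card_imset; try exact: set1_inj.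
  by rewrite cardsT card_ffun card_bool card_ord.
set s := #|[set i | p i == None]|.
have sm : s = m by apply: (expnI (isT : 1 < 2)); rewrite -card_face -Fp.
have AR : A \subset @cube_face n @: refines p.
  apply/subsetP=> X; rewrite inE => /andP [/KC /imsetP [q _ ->]]; rewrite Fp => sub.
  apply: imset_f; rewrite inE; apply/forallP=> i.
  by case pi: (p i) => [b|] //; rewrite (sub_face sub pi).
have e : A = @cube_face n @: refines p.
  apply/eqP; rewrite eqEcard AR card_imset; last exact: cube_face_inj.
  by rewrite card_refines cardA -/s sm leqnn.
have : G \in A.
  rewrite e; move: GC => /imsetP [q _ Gq]; rewrite Gq; apply: imset_f.
  rewrite inE; apply/forallP=> i; case pi: (p i) => [b|] //.
  by rewrite (sub_face (p := p) (q := q) _ pi) // -Gq -Fp.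
by rewrite inE => /andP [].
Qed.


Lemma bnd_set1 N (y : cvert N) : 0 < N -> [set y] \in boundary_cube N.
Proof.
move=> N0; rewrite !inE set1_in_faces andbT; apply/eqP=> e.
have := in_setT (flip (Ordinal N0) y); rewrite -e inE; apply/negP; exact: flip_neq.
Qed.

Lemma bnd_edge N (y : cvert N) i : 1 < N -> [set y; flip i y] \in boundary_cube N.
Proof.
move=> N1; rewrite !inE.
have [j ji] : exists j : 'I_N, j != i.
  have N0 : 0 < N by apply: ltnW.
  case: (eqVneq i (Ordinal N0)) => [ei|ne]; last by exists (Ordinal N0); rewrite eq_sym.
  by exists (Ordinal N1); rewrite ei.
apply/andP; split.
  apply/eqP=> e; have := in_setT (flip j y); rewrite -e !inE; apply/negP.
  rewrite negb_or flip_neq /=; apply/eqP=> /ffunP /(_ j).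
  by rewrite !flipE eqxx (negbTE ji) addbF addbT; case: (y j).
apply/imsetP; exists [ffun l => if l == i then None else Some (y l)] => //.
apply/setP=> x; rewrite !inE; apply/idP/forallP => [/orP [] /eqP -> l|H].
  by rewrite ffunE; case: ifP.
  by rewrite ffunE; case: ifP => // li; rewrite flipE li addbF.
case: (eqVneq (x i) (y i)) => [xi|xi]; [apply/orP; left|apply/orP; right];
  apply/eqP/ffunP=> l; (case: (eqVneq l i) => [->|li];
  [|have := H l; rewrite ffunE (negbTE li) => /eqP ->]); rewrite ?flipE ?eqxx ?(negbTE li) ?addbF //.
by move: xi; rewrite addbT; case: (x i); case: (y i).
Qed.


Theorem mainTheorem3 (n : nat) (K : {set {set cvert n}}) (k : nat)
    (S : {set {set cvert n}}) :
  subcomplex K (cube_faces n) ->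
  subcomplex S K ->
  complex_iso S (boundary_cube k.+1) ->
  1 <= k ->
  face_like S K <-> (forall F, F \in K -> S <> hat_boundary K F).
Proof.
move=> Kc [/subsetP SK Scc] [f [finj fimg fiso]] k1.
have Kc' := Kc; case: Kc' => /subsetP KC [K0 Kv Kiso Kint].
set N := k.+1; set L := boundary_cube N.
set V := vertices S.
have VL : vertices L = setT.
  apply/setP=> y; rewrite inE; apply/bigcupP; exists [set y]; last by rewrite inE.
  exact: bnd_set1.
have ex y : exists x, (x \in V) && (f x == y).
  have : y \in f @: V by rewrite fimg VL inE.
  by case/imsetP=> x xV ->; exists x; rewrite xV eqxx.
pose g y := xchoose (ex y).
have gP y : g y \in V /\ f (g y) = y by have /andP [-> /eqP ->] := xchooseP (ex y).
have ginj : injective g by move=> y1 y2 e; rewrite -(gP y1).2 -(gP y2).2 e.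
have gf x : x \in V -> g (f x) = x.
  by move=> xV; apply: finj => //; [exact: (gP _).1 | exact: (gP _).2].
have VS : V = g @: setT.
  apply/setP=> x; apply/idP/imsetP => [xV|[y _ ->]]; last exact: (gP y).1.
  by exists (f x); rewrite ?gf.
have Siff (B : {set cvert N}) : (g @: B \in S) = (B \in L).
  rewrite fiso; last by apply/subsetP=> x /imsetP [y _ ->]; exact: (gP y).1.
  by rewrite -imset_comp (eq_imset _ (fun y => (gP y).2)) imset_id.
have [D [Dinj HD]] : exists D : 'I_N -> 'I_n, injective D /\ forall y i, g (flip i y) = flip (D i) (g y).
  apply: affine => // y i; apply: edge_flip.
    by apply/eqP=> /ginj /esym /eqP; apply/negP; exact: flip_neq.
  apply: KC; apply: SK; have -> : [set g y; g (flip i y)] = g @: [set y; flip i y] by rewrite imsetU1 imset_set1.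
  rewrite Siff.
  exact: bnd_edge.
have VC : V \in cube_faces n by rewrite VS; exact: image_face Dinj HD.
have VnS : V \notin S by rewrite VS Siff !inE eqxx.
have Gface G : G \in cube_faces n -> G :&: V != set0 -> G :&: V \in S \/ V \subset G.
  move=> GC /set0Pn [x0 /setIP [x0G x0V]].
  set B := [set y | g y \in G].
  have XB : G :&: V = g @: B.
    apply/setP=> x; rewrite inE; apply/andP/imsetP => [[xG xV]|[y]].
      by exists (f x); rewrite ?inE gf.
    by rewrite inE => gyG ->; split => //; exact: (gP y).1.
  have BC : B \in cube_faces N.
    move: GC => /imsetP [p _ Gp]; rewrite /B Gp; apply: (preimage_face Dinj HD (y0 := f x0)).
    by rewrite gf // -Gp.
  case: (eqVneq B setT) => [BT|BnT].
    by right; rewrite VS -BT -XB; apply: subsetIl.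
  by left; rewrite XB Siff !inE BnT BC.
split.
  move=> FL F FK e.
  have := (gP (z0 N)).1 => /bigcupP [X0 X0S _].
  have := X0S; rewrite e !inE => /andP [X0F /andP [X0K X0sF]].
  have FV : F \subset V.
    apply/subsetP=> x xF.
    have xK : [set x] \in K by apply: Kv; apply/bigcupP; exists F.
    have : [set x] \in S.
      rewrite e !inE xK sub1set xF !andbT; apply/eqP=> Fx.
      move: X0sF; rewrite -Fx subset1 => /orP [] /eqP X0e.
        by rewrite X0e Fx eqxx in X0F.
      by move: K0; rewrite -X0e X0K.
    by move=> xS; apply/bigcupP; exists [set x] => //; rewrite inE.
  case: (FL F FK); rewrite (setIidPl FV).
    by move=> F0; move: K0; rewrite -F0 FK.
  by rewrite e !inE eqxx.
move=> H F FK; case: (eqVneq (F :&: V) set0) => [->|ne]; first by left.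
case: (Gface F (KC F FK) ne) => [|sub]; first by right.
exfalso; have VK : V \in K := sub_in_K Kc FK VC sub.
apply: (H V VK); apply/setP=> X; rewrite !inE.
apply/idP/and3P => [XS|[XV XK XsV]].
  split; first by apply: contraNneq VnS => <-.
    exact: SK.
  exact: (bigcup_sup X XS).
have X0 : X :&: V != set0 by rewrite (setIidPl XsV); apply: contraNneq K0 => <-.
case: (Gface X (KC X XK) X0) => [|VsX]; first by rewrite (setIidPl XsV).
by move: XV; rewrite eqEsubset XsV VsX.
Qed.
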